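(* Consider the following iteration (Kaczmarz method with line-search), started at $x_0\in\mathbb{R}^n$: for $k=0,1,2,\ldots$, set $d=P(x_k)-x_k$ and $\delta=\|d\|^2$; if $\delta=0$, terminate and return $x_k$; otherwise set $\rho=\|r(x_k)\|^2$, $s=\frac12+\frac{\rho}{2\delta}$ and $x_{k+1}=x_k+sd$. Then either the iteration terminates after finitely many steps and returns some $x_k$ with $Ax_k=b$, or it generates a well-defined infinite sequence $(x_k)_k$ such that for all $k$ and all $x^*\in\mathbb{R}^n$ with $Ax^*=b$: \[x_{k+1}=\operatorname{argmin}_{\xi\in\operatorname{aff}(x_k,P(x_k))}\|\xi-x^*\|^2,\qquad \|x_k-x^*\|^2-\|x_{k+1}-x^*\|^2=\frac{(\|r(x_k)\|^2+\|P(x_k)-x_k\|^2)^2}{4\|P(x_k)-x_k\|^2},\] and in particular $\|x_{k+1}-x^*\|^2\le\|P(x_k)-x^*\|^2$.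
   Context: Let $A=(a_1,\ldots,a_m)^T\in\mathbb{R}^{m\times n}$ with rows $a_j\in\mathbb{R}^n\setminus\{0\}$, and let $b\in\mathbb{R}^m$ lie in the range of $A$. Norms are Euclidean. For $j=1,\ldots,m$ define the projectors $P_j:\mathbb{R}^n\to\mathbb{R}^n$, $P_j(x)=\big(I-\frac{a_ja_j^T}{\|a_j\|^2}\big)x+\frac{b_j}{\|a_j\|^2}a_j$ (the orthogonal projection onto $\{z:a_j^Tz=b_j\}$), and the Kaczmarz cycle $P=P_m\circ\cdots\circ P_1$. The residual $r:\mathbb{R}^n\to\mathbb{R}^m$ is defined by $r_1(x)=(a_1^Tx-b_1)/\|a_1\|$ and $r_j(x)=(a_j^T(P_{j-1}\circ\cdots\circ P_1)(x)-b_j)/\|a_j\|$ for $j=2,\ldots,m$. $\operatorname{aff}(\cdot)$ denotes the affine hull. *)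

(* Defs.v *)
From mathcomp Require Import all_boot all_order all_algebra.
From mathcomp Require Import reals.
Set Implicit Arguments. Unset Strict Implicit. Unset Printing Implicit Defensive.
Import Order.TTheory GRing.Theory Num.Theory.
Local Open Scope ring_scope.

Section Kaczmarz.
Variables (R : realType) (m n : nat) (A : 'M[R]_(m, n)) (b : 'cV[R]_m).

Definition dotv (k : nat) (u v : 'cV[R]_k) : R := (u^T *m v) 0 0.
Definition sqnorm (k : nat) (u : 'cV[R]_k) : R := dotv u u.
Definition enorm (k : nat) (u : 'cV[R]_k) : R := Num.sqrt (sqnorm u).

Definition arow (j : 'I_m) : 'cV[R]_n := (row j A)^T.

Definition proj_j (j : 'I_m) (x : 'cV[R]_n) : 'cV[R]_n :=
  (1%:M - (sqnorm (arow j))^-1 *: (arow j *m (arow j)^T)) *m x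
  + (b j 0 / sqnorm (arow j)) *: arow j.

Definition partial_cycle (k : nat) (x : 'cV[R]_n) : 'cV[R]_n :=
  foldl (fun y j => proj_j j y) x (take k (enum 'I_m)).

Definition Pcycle (x : 'cV[R]_n) : 'cV[R]_n :=
  foldl (fun y j => proj_j j y) x (enum 'I_m).

(* residual r(x) in R^m:
   r_j(x) = (a_j^T (P_{j-1} o ... o P_1)(x) - b_j) / ||a_j|| (0-indexed j) *)
Definition residual (x : 'cV[R]_n) : 'cV[R]_m :=
  \col_(j < m) ((dotv (arow j) (partial_cycle j x) - b j 0) / enorm (arow j)).

(* one step of the Kaczmarz method with line-search; once delta = 0 the
   iteration has terminated and the iterate is kept fixed *)
Definition kls_step (x : 'cV[R]_n) : 'cV[R]_n :=
  let d := Pcycle x - x in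
  let delta := sqnorm d in
  if delta == 0 then x
  else let rho := sqnorm (residual x) in
       let s := 2^-1 + rho / (2 * delta) in
       x + s *: d.

Definition kls_seq (x0 : 'cV[R]_n) (k : nat) : 'cV[R]_n := iter k kls_step x0.

End Kaczmarz.

Definition aff2 (R : realType) (k : nat) (p q : 'cV[R]_k) (xi : 'cV[R]_k) : Prop :=
  exists t : R, xi = (1 - t) *: p + t *: q.

Definition is_argmin (R : realType) (T : Type) (S : T -> Prop) (f : T -> R) (z : T)
  : Prop :=
  S z /\ forall xi, S xi -> xi <> z -> f z < f xi.

(* Main.v *)
Require Import Defs.
From Stdlib Require Import Classical.
From mathcomp Require Import all_boot all_order all_algebra.
From mathcomp Require Import reals.
From mathcomp Require Import ring lra.
Import Order.TTheory GRing.Theory Num.Theory.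
Local Open Scope ring_scope.
Set Implicit Arguments. Unset Strict Implicit.

Section H.
Variable R : realType.

Lemma dotvE k (u v : 'cV[R]_k) : dotv u v = \sum_i u i 0 * v i 0.
Proof. rewrite /dotv !mxE; apply: eq_bigr => i _; rewrite mxE. by []. Qed.

Lemma dotvC k (u v : 'cV[R]_k) : dotv u v = dotv v u.
Proof. rewrite !dotvE; apply: eq_bigr => i _; exact: mulrC. Qed.

Lemma dotvBl k (u v w : 'cV[R]_k) : dotv (u - v) w = dotv u w - dotv v w.
Proof. rewrite !dotvE -sumrB; apply: eq_bigr => i _; rewrite !mxE; ring. Qed.

Lemma sqnormDZ k (u v : 'cV[R]_k) c :
  sqnorm (u + c *: v) = sqnorm u + 2 * c * dotv u v + c ^+ 2 * sqnorm v.
Proof.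
rewrite /sqnorm !dotvE !mulr_sumr -!big_split /=; apply: eq_bigr => i _; rewrite !mxE; ring.
Qed.

Lemma sqnorm_ge0 k (u : 'cV[R]_k) : 0 <= sqnorm u.
Proof. rewrite /sqnorm dotvE; apply: sumr_ge0 => i _; by rewrite -expr2 sqr_ge0. Qed.

Lemma sqnorm_gt0 k (u : 'cV[R]_k) : u != 0 -> 0 < sqnorm u.
Proof.
move=> u0; rewrite lt_def sqnorm_ge0 andbT; apply/negP => /eqP.
rewrite /sqnorm dotvE => /eqP; rewrite psumr_eq0 => [/allP H|i _]; last by rewrite -expr2 sqr_ge0.
apply/negP: u0; rewrite negbK; apply/eqP/matrixP => i j; rewrite ord1 mxE.
have := H i (mem_index_enum _); rewrite mulf_eq0 orbb => /eqP ->//.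
Qed.
Variables (m n : nat) (A : 'M[R]_(m, n)) (b : 'cV[R]_m).

Lemma projE j y : proj_j A b j y =
  y + (- ((dotv (arow A j) y - b j 0) / sqnorm (arow A j))) *: arow A j.
Proof.
rewrite /proj_j mulmxBl mul1mx -scalemxAl -mulmxA.
apply/matrixP => i k; rewrite ord1 !mxE big_ord1 !mxE.
rewrite /dotv mxE; ring. Qed.
Lemma dot_arow xs : A *m xs = b -> forall j, dotv (arow A j) xs = b j 0.
Proof. move=> <- j; rewrite dotvE !mxE; apply: eq_bigr => i _; rewrite !mxE. by []. Qed.

Lemma arow_gt0 j : row j A != 0 -> 0 < sqnorm (arow A j).
Proof. move=> H; apply: sqnorm_gt0; apply: contra H => /eqP H.
by rewrite -[row j A]trmxK -/(arow A j) H trmx0. Qed.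

Lemma proj_dist j y xs : A *m xs = b -> row j A != 0 ->
  sqnorm (y - xs) - sqnorm (proj_j A b j y - xs) =
  (dotv (arow A j) y - b j 0) ^+ 2 / sqnorm (arow A j).
Proof.
move=> Hxs Hj; have Np := arow_gt0 Hj.
rewrite projE addrAC sqnormDZ dotvBl [dotv xs _]dotvC (dot_arow Hxs).
rewrite [dotv y _]dotvC. field. by rewrite gt_eqF.
Qed.

Lemma res_sq x j : (residual A b x j 0) ^+ 2 =
  (dotv (arow A j) (partial_cycle A b j x) - b j 0) ^+ 2 / sqnorm (arow A j).
Proof.
rewrite mxE expr_div_n /enorm sqr_sqrtr //; exact: sqnorm_ge0.
Qed.

Lemma pc0 x : partial_cycle A b 0 x = x.
Proof. by rewrite /partial_cycle take0. Qed.

Lemma pcm x : partial_cycle A b m x = Pcycle A b x.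
Proof. by rewrite /partial_cycle take_oversize // size_enum_ord. Qed.

Lemma pcS k x (Hk : (k < m)%N) :
  partial_cycle A b k.+1 x = proj_j A b (Ordinal Hk) (partial_cycle A b k x).
Proof.
rewrite /partial_cycle (take_nth (Ordinal Hk)) ?size_enum_ord // foldl_rcons.
by rewrite (nth_ord_enum (Ordinal Hk) (Ordinal Hk)).
Qed.

Lemma telescope x xs : A *m xs = b -> (forall j, row j A != 0) ->
  forall k, (k <= m)%N ->
  sqnorm (x - xs) - sqnorm (partial_cycle A b k x - xs) =
  \sum_(j < m | (j < k)%N) (residual A b x j 0) ^+ 2.
Proof.
move=> Hxs HA; elim=> [_|k IH Hk].
  by rewrite pc0 subrr big_pred0.
rewrite pcS (bigD1 (Ordinal Hk)) //=.
rewrite (eq_bigl (fun j : 'I_m => (j < k)%N)); last first.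
  move=> j /=; rewrite ltnS leq_eqVlt -(inj_eq val_inj) /=.
  by case: ltngtP.
rewrite -IH; last exact: ltnW.
rewrite (@res_sq x (Ordinal Hk)) -(@proj_dist (Ordinal Hk) (partial_cycle A b k x) xs Hxs (HA _)).
by rewrite [RHS]addrC addrA subrK.
Qed.

Lemma mulmx_dot x j : (A *m x) j 0 = dotv (arow A j) x.
Proof. rewrite dotvE !mxE; apply: eq_bigr => i _; rewrite !mxE. by []. Qed.

Lemma sqnorm_sum k (u : 'cV[R]_k) : sqnorm u = \sum_i (u i 0) ^+ 2.
Proof. by rewrite /sqnorm dotvE; apply: eq_bigr => i _; rewrite expr2. Qed.

Lemma full_tele x xs : A *m xs = b -> (forall j, row j A != 0) ->
  sqnorm (x - xs) - sqnorm (Pcycle A b x - xs) = sqnorm (residual A b x).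
Proof.
move=> Hxs HA; rewrite -pcm (telescope x Hxs HA (leqnn m)) sqnorm_sum.
by apply: eq_bigl => j; rewrite ltn_ord.
Qed.

Lemma sqnorm_eq0 k (u : 'cV[R]_k) : sqnorm u = 0 -> u = 0.
Proof. move=> H; apply/eqP; apply: contraT => /sqnorm_gt0; by rewrite H ltxx. Qed.

Lemma fix_res x xs : A *m xs = b -> (forall j, row j A != 0) ->
  Pcycle A b x = x -> forall j,
  dotv (arow A j) (partial_cycle A b j x) - b j 0 = 0.
Proof.
move=> Hxs HA HP.
have := full_tele x Hxs HA.
rewrite HP subrr => /esym.
rewrite sqnorm_sum.
move/eqP; rewrite psumr_eq0; last by move=> i _; exact: sqr_ge0.
move/allP => Hall j.
have := Hall j (mem_index_enum _).
rewrite implyTb res_sq.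
rewrite mulf_eq0 invr_eq0 (gt_eqF (arow_gt0 (HA j))) orbF.
rewrite sqrf_eq0 => /eqP //.
Qed.

Lemma fix_pc x : (forall j : 'I_m, dotv (arow A j) (partial_cycle A b j x) - b j 0 = 0) ->
  forall k, (k <= m)%N -> partial_cycle A b k x = x.
Proof.
move=> Hc; elim=> [|k IH Hk]; first by rewrite pc0.
rewrite pcS projE.
have := Hc (Ordinal Hk).
rewrite IH; last exact: ltnW.
move=> ->.
by rewrite mul0r oppr0 scale0r addr0.
Qed.

Lemma fixed_sol x xs : A *m xs = b -> (forall j, row j A != 0) ->
  sqnorm (Pcycle A b x - x) = 0 -> A *m x = b.
Proof.
move=> Hxs HA /sqnorm_eq0/eqP; rewrite subr_eq0 => /eqP HP.
have Hc := fix_res Hxs HA HP.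
have Hpc := fix_pc Hc.
apply/matrixP => j k; rewrite ord1 mulmx_dot.
have := Hc j; rewrite Hpc; last exact: ltnW.
move=> H; apply/eqP; rewrite -subr_eq0; apply/eqP; exact: H.
Qed.
End H.
Section L.
Variable R : realType.
Variable n : nat.
Implicit Types x p xs : 'cV[R]_n.

Lemma line_props x p xs (rho : R) :
  sqnorm (p - x) != 0 ->
  sqnorm (x - xs) - sqnorm (p - xs) = rho ->
  is_argmin (aff2 x p) (fun xi => sqnorm (xi - xs))
     (x + (2^-1 + rho / (2 * sqnorm (p - x))) *: (p - x)) /\
  sqnorm (x - xs) - sqnorm (x + (2^-1 + rho / (2 * sqnorm (p - x))) *: (p - x) - xs)
     = (rho + sqnorm (p - x)) ^+ 2 / (4 * sqnorm (p - x)) /\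
  sqnorm (x + (2^-1 + rho / (2 * sqnorm (p - x))) *: (p - x) - xs) <= sqnorm (p - xs).
Proof.
move=> Hd Hrho.
set d := p - x in Hd *; set delta := sqnorm d in Hd *.
set s := 2^-1 + rho / (2 * delta).
have dpos : 0 < delta by rewrite lt_def Hd sqnorm_ge0.
have Hp : p = x + 1 *: d by rewrite scale1r /d addrC subrK.
have Hlin t : x + t *: d - xs = (x - xs) + t *: d by rewrite addrAC.
have Hdot : 2 * dotv (x - xs) d = - rho - delta.
  move: Hrho; rewrite Hp Hlin sqnormDZ -/delta => <-; ring.
have Hs : 2 * delta * s = rho + delta.
  rewrite /s; field; by rewrite gt_eqF.
have key t : sqnorm (x + t *: d - xs) =
    sqnorm (x - xs) - 2 * delta * s * t + t ^+ 2 * delta.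
  rewrite Hlin sqnormDZ -/delta Hs.
  have -> : rho + delta = - (2 * dotv (x - xs) d) by rewrite Hdot; ring.
  ring.
have Haff t : (1 - t) *: x + t *: p = x + t *: d.
  by rewrite /d scalerBr scalerBl scale1r addrAC addrA.
split; [split|split].
- exists s; by rewrite Haff.
- move=> xi [t ->] Hne; rewrite Haff in Hne *.
  rewrite !key.
  have tne : t != s by apply/eqP => ets; apply: Hne; rewrite ets.
  have : 0 < delta * (t - s) ^+ 2.
    by rewrite mulr_gt0 // lt_def sqr_ge0 andbT sqrf_eq0 subr_eq0.
  move=> H; rewrite -subr_gt0.
  have -> : sqnorm (x - xs) - 2 * delta * s * t + t ^+ 2 * delta -
    (sqnorm (x - xs) - 2 * delta * s * s + s ^+ 2 * delta) = delta * (t - s) ^+ 2 by ring.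
  exact: H.
- rewrite key -Hs; field; by rewrite gt_eqF.
- rewrite key [in X in _ <= X]Hp key -subr_ge0.
  have -> : sqnorm (x - xs) - 2 * delta * s * 1 + 1 ^+ 2 * delta -
    (sqnorm (x - xs) - 2 * delta * s * s + s ^+ 2 * delta) = delta * (1 - s) ^+ 2 by ring.
  by rewrite mulr_ge0 ?sqr_ge0 // ltW.
Qed.
End L.


Lemma kls_seqS (R : realType) m n (A : 'M[R]_(m, n)) b x0 k :
  kls_seq A b x0 k.+1 = kls_step A b (kls_seq A b x0 k).
Proof. by rewrite /kls_seq iterS. Qed.

Lemma kls_next (R : realType) m n (A : 'M[R]_(m, n)) b x :
  sqnorm (Pcycle A b x - x) != 0 ->
  kls_step A b x = x + (2^-1 + sqnorm (residual A b x) / (2 * sqnorm (Pcycle A b x - x))) *: (Pcycle A b x - x).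
Proof. by move=> H; rewrite /kls_step (negbTE H). Qed.

Lemma right_step (R : realType) m n (A : 'M[R]_(m, n)) b x xs :
  (forall j : 'I_m, row j A != 0) -> A *m xs = b ->
  sqnorm (Pcycle A b x - x) != 0 ->
     is_argmin (aff2 x (Pcycle A b x))
               (fun xi => sqnorm (xi - xs)) (kls_step A b x) /\
     sqnorm (x - xs) - sqnorm (kls_step A b x - xs) =
       (sqnorm (residual A b x)
        + sqnorm (Pcycle A b x - x)) ^+ 2
       / (4 * sqnorm (Pcycle A b x - x)) /\
     sqnorm (kls_step A b x - xs) <= sqnorm (Pcycle A b x - xs).
Proof.
move=> HA Hxs Hd; rewrite (kls_next Hd).
exact: (line_props Hd (full_tele x Hxs HA)).
Qed.

Theorem corollary5 (R : realType) (m n : nat) (A : 'M[R]_(m, n)) (b : 'cV[R]_m)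
    (x0 : 'cV[R]_n) :
  (forall j : 'I_m, row j A != 0) ->
  (exists x : 'cV[R]_n, A *m x = b) ->
  (exists k : nat,
      (forall i : nat, (i < k)%N ->
         sqnorm (Pcycle A b (kls_seq A b x0 i) - kls_seq A b x0 i) != 0) /\
      sqnorm (Pcycle A b (kls_seq A b x0 k) - kls_seq A b x0 k) = 0 /\
      A *m kls_seq A b x0 k = b)
  \/
  ((forall k : nat,
      sqnorm (Pcycle A b (kls_seq A b x0 k) - kls_seq A b x0 k) != 0) /\
   forall (k : nat) (xs : 'cV[R]_n), A *m xs = b ->
     is_argmin (aff2 (kls_seq A b x0 k) (Pcycle A b (kls_seq A b x0 k)))
               (fun xi => sqnorm (xi - xs)) (kls_seq A b x0 k.+1) /\
     sqnorm (kls_seq A b x0 k - xs) - sqnorm (kls_seq A b x0 k.+1 - xs) =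
       (sqnorm (residual A b (kls_seq A b x0 k))
        + sqnorm (Pcycle A b (kls_seq A b x0 k) - kls_seq A b x0 k)) ^+ 2
       / (4 * sqnorm (Pcycle A b (kls_seq A b x0 k) - kls_seq A b x0 k)) /\
     sqnorm (kls_seq A b x0 k.+1 - xs) <= sqnorm (Pcycle A b (kls_seq A b x0 k) - xs)).
Proof.
move=> HA [xs Hxs].
pose P : pred nat := fun k => sqnorm (Pcycle A b (kls_seq A b x0 k) - kls_seq A b x0 k) == 0.
case: (classic (exists k, P k)) => [Hex|Hnex].
  left; case: (ex_minnP Hex) => k Hk Hmin.
  exists k; split; last split.
  - move=> i Hi; apply/negP => Hi0; have := Hmin i Hi0; by rewrite leqNgt Hi.
  - exact/eqP.
  - exact: (fixed_sol Hxs HA (eqP Hk)).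
right.
have Hall k : sqnorm (Pcycle A b (kls_seq A b x0 k) - kls_seq A b x0 k) != 0.
  by apply/negP => H; apply: Hnex; exists k.
split=> // k xs' Hxs'.
rewrite kls_seqS; exact: right_step.
Qed.
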